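(* Let $\mu$ be a signature and let $\mathcal A$ be an ideal of $\Omega_\mu$. If $\mathcal A$ has the extension property, then $\mathcal A$ is representable, i.e. there is a relational structure $\mathfrak A$ of signature $\mu$ with $\mathrm{age}(\mathfrak A)=\mathcal A$.
   Context: A signature is a map $\mu:I\to\mathbb{N}^*$; a relational structure of signature $\mu$ is $\mathfrak A=(A;(R_i)_{i\in I})$ with $R_i$ a $\mu_i$-ary relation on $A$. Embeddings are injective maps preserving and reflecting all relations; $\mathfrak A\le \mathfrak B$ means $\mathfrak A$ embeds into $\mathfrak B$. $\Omega_\mu$ is the set of isomorphism types of finite structures of signature $\mu$, ordered by $\le$; an ideal is a non-empty, downward closed, up-directed subset. The age of $\mathfrak A$ is the set of isomorphism types of its finite induced substructures. For an ideal $\mathcal A$ of $\Omega_\mu$, a structure $\mathfrak A$ of signature $\mu$ (of any cardinality) with $\mathrm{age}(\mathfrak A)\subseteq\mathcal A$ is extendable w.r.t. $\mathcal A$ if for every $\mathfrak B\in\mathcal A$ there is a structure $\mathfrak C$ with $\mathrm{age}(\mathfrak C)\subseteq\mathcal A$ which extends both $\mathfrak A$ and $\mathfrak B$ (both embed into $\mathfrak C$). $\mathcal A$ has the extension property if every structure $\mathfrak A$ of signature $\mu$ with $|A|<\kappa:=|\mathcal A|$ and $\mathrm{age}(\mathfrak A)\subseteq\mathcal A$ is extendable w.r.t. $\mathcal A$. *)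

(* Defs.v *)
From mathcomp Require Import all_boot.
Set Implicit Arguments.
Unset Strict Implicit.
Unset Printing Implicit Defensive.

(* A signature is mu : I -> nat with every arity >= 1 (hypothesis in the
   theorem). *)
Record structure (I : Type) (mu : I -> nat) := Struct {
  carrier :> Type;
  rel : forall i : I, ('I_(mu i) -> carrier) -> Prop }.

Definition embedding I (mu : I -> nat) (A B : structure mu)
  (f : carrier A -> carrier B) : Prop :=
  injective f /\
  forall (i : I) (x : 'I_(mu i) -> carrier A),
    @rel I mu A i x <-> @rel I mu B i (fun k => f (x k)).

Arguments embedding {I mu} A B f.

Definition embeds I (mu : I -> nat) (A B : structure mu) : Prop :=
  exists f : carrier A -> carrier B, embedding A B f.

(* Finite structures of signature mu, with carrier {0,..,n-1}.  Every finite
   structure is isomorphic to one of these; isomorphism types of finite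
   structures are the isomorphism classes of these. *)
Record finstr (I : Type) (mu : I -> nat) := FinStr {
  fsize : nat;
  frel : forall i : I, ('I_(mu i) -> 'I_fsize) -> Prop }.

Definition fs_struct I (mu : I -> nat) (s : finstr mu) : structure mu :=
  @Struct I mu 'I_(fsize s) (@frel I mu s).

Definition fle I (mu : I -> nat) (s t : finstr mu) : Prop :=
  embeds (fs_struct s) (fs_struct t).

Definition fiso I (mu : I -> nat) (s t : finstr mu) : Prop :=
  exists f : 'I_(fsize s) -> 'I_(fsize t),
    embedding (fs_struct s) (fs_struct t) f /\ (forall y, exists x, f x = y).

(* A subset of Omega_mu is represented by a predicate on finite structures;
   for ideals (downward closed) this predicate is automatically closed under
   isomorphism, so it is exactly a set of isomorphism types. *)
Definition ideal I (mu : I -> nat) (A : finstr mu -> Prop) : Prop :=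
  (exists s, A s) /\
  (forall s t, fle s t -> A t -> A s) /\
  (forall s t, A s -> A t -> exists u, A u /\ fle s u /\ fle t u).

(* age(C): the isomorphism types of the finite induced substructures of C,
   i.e. the finite structures embeddable in C. *)
Definition in_age I (mu : I -> nat) (C : structure mu) (s : finstr mu) : Prop :=
  embeds (fs_struct s) C.

Definition age_sub I (mu : I -> nat) (C : structure mu)
  (A : finstr mu -> Prop) : Prop :=
  forall s, in_age C s -> A s.

Definition isotype_in I (mu : I -> nat) (A : finstr mu -> Prop) : Type :=
  { P : finstr mu -> Prop | exists s, A s /\ P = fiso s }.

(* |carrier C| < |A| : there is no injection from A (the set of isomorphism
   types) into the carrier of C. *)
Definition card_lt I (mu : I -> nat) (C : structure mu)
  (A : finstr mu -> Prop) : Prop :=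
  ~ exists f : isotype_in A -> carrier C, injective f.

Definition extendable I (mu : I -> nat) (A : finstr mu -> Prop)
  (C : structure mu) : Prop :=
  forall B, A B ->
    exists D : structure mu,
      age_sub D A /\ embeds C D /\ embeds (fs_struct B) D.

Definition extension_property I (mu : I -> nat) (A : finstr mu -> Prop) : Prop :=
  forall C : structure mu, card_lt C A -> age_sub C A -> extendable A C.

Definition representable I (mu : I -> nat) (A : finstr mu -> Prop) : Prop :=
  exists C : structure mu, forall s, in_age C s <-> A s.

(* Main.v *)
Require Import Defs.
From mathcomp Require Import all_boot.
From mathcomp Require Import boolp wochoice.
From mathcomp Require Import zify.
Set Implicit Arguments.
Unset Strict Implicit.
Unset Printing Implicit Defensive.

Lemma wo_exists (X : Type) : exists R : X -> X -> Prop,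
  [/\ (forall x, R x x), (forall x y z, R x y -> R y z -> R x z),
      (forall x y, R x y -> R y x -> x = y), (forall x y, R x y \/ R y x) &
      (forall P : X -> Prop, (exists x, P x) -> exists z, P z /\ forall x, P x -> R z x)].
Proof.
elim/Peq : X => X.
have [R wR] := well_ordering_principle X.
have minP (P : X -> Prop) : (exists x, P x) -> exists z, P z /\ forall x, P x -> R z x.
  move=> [x Px].
  have [|z [[Az lb] _]] := wR [pred y | `[< P y >]].
    by exists x; rewrite inE; apply/asboolP.
  move: Az; rewrite inE => /asboolP Pz; exists z; split => // y Py.
  by apply: lb; rewrite inE; apply/asboolP.
have refl x : R x x.
  have [z [-> H]] := minP (fun y => y = x) (ex_intro _ x erefl).
  exact: H.
have anti x y : R x y -> R y x -> x = y.
  move=> Rxy Ryx.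
  have [|z [_ U]] := wR [pred w | `[< w = x \/ w = y >]].
    by exists x; rewrite inE; apply/asboolP; left.
  have ex : minimum_of R [pred w | `[< w = x \/ w = y >]] x.
    split; first by rewrite inE; apply/asboolP; left.
    by move=> w; rewrite inE => /asboolP [->|->].
  have ey : minimum_of R [pred w | `[< w = x \/ w = y >]] y.
    split; first by rewrite inE; apply/asboolP; right.
    by move=> w; rewrite inE => /asboolP [->|->].
  by rewrite -(U _ ex) (U _ ey).
have tot x y : R x y \/ R y x.
  have [z [Pz H]] := minP (fun w => w = x \/ w = y) (ex_intro _ x (or_introl erefl)).
  by case: Pz => Ez; subst z; [left|right]; apply: H; [right|left].
exists R; split => //.
move=> x y z Rxy Ryz.
have [w [Pw H]] := minP (fun v => v = x \/ v = y \/ v = z) (ex_intro _ x (or_introl erefl)).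
case: Pw => [Ew|[Ew|Ew]]; subst w.
- by apply: H; right; right.
- have Ryx : R y x by apply: H; left.
  by rewrite (anti _ _ Rxy Ryx).
- have Rzy : R z y by apply: H; right; left.
  by rewrite -(anti _ _ Ryz Rzy).
Qed.

Lemma sig_eq (X : Type) (P : X -> Prop) (a b : {x : X | P x}) : proj1_sig a = proj1_sig b -> a = b.
Proof.
case: a b => [a pa] [b pb] /= E; subst b.
by rewrite (Prop_irrelevance pa pb).
Qed.

Section Main.
Variables (I : Type) (mu : I -> nat).
Hypothesis hmu : forall i, 0 < mu i.
Variable A : finstr mu -> Prop.
Hypothesis hid : ideal A.

Lemma emb_comp (C1 C2 C3 : structure mu) f g :
  embedding C1 C2 f -> embedding C2 C3 g -> embedding C1 C3 (fun x => g (f x)).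
Proof.
move=> [fi fr] [gi gr]; split; first by move=> a b /gi /fi.
by move=> i x; apply: (iff_trans (fr i x) (gr i _)).
Qed.

Lemma embeds_trans (C1 C2 C3 : structure mu) :
  embeds C1 C2 -> embeds C2 C3 -> embeds C1 C3.
Proof. by move=> [f hf] [g hg]; exists (fun x => g (f x)); apply: emb_comp hf hg. Qed.

Lemma age_sub_emb (C1 C2 : structure mu) :
  embeds C1 C2 -> age_sub C2 A -> age_sub C1 A.
Proof. by move=> e h s hs; apply: h; apply: embeds_trans hs e. Qed.

Lemma size0 s : fsize s = 0 -> A s.
Proof.
have [[b Ab] [hdown _]] := hid.
move=> Hs; apply: (hdown _ b) => //.
case: s Hs => m r /= Hm; subst m.
have F : 'I_0 -> False by case.
exists (fun k => False_rect _ (F k)); split; first by move=> k; case: (F k).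
by move=> i x; case: (F (x (Ordinal (hmu i)))).
Qed.

Definition Data (U : Type) :=
  ((U -> Prop) * (forall i : I, ('I_(mu i) -> U) -> Prop))%type.

Definition mkS (U : Type) (d : Data U) : structure mu :=
  @Struct I mu {u : U | d.1 u} (fun i t => d.2 i (fun k => proj1_sig (t k))).

Definition coh (U : Type) (d1 d2 : Data U) :=
  (forall u, d1.1 u -> d2.1 u) /\
  (forall i t, (forall k, d1.1 (t k)) -> (d1.2 i t <-> d2.2 i t)).

Section Union.
Variables (U J : Type) (P : J -> Prop) (le : J -> J -> Prop) (d : J -> Data U).
Hypothesis hcoh : forall y z, P y -> P z -> le y z -> coh (d y) (d z).
Hypothesis htot : forall y z, P y -> P z -> le y z \/ le z y.

Definition udata : Data U :=
  (fun u => exists y (_ : P y), (d y).1 u,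
   fun i t => exists y (_ : P y), (forall k, (d y).1 (t k)) /\ (d y).2 i t).

Lemma union_rel y i t : P y -> (forall k, (d y).1 (t k)) ->
  (udata.2 i t <-> (d y).2 i t).
Proof.
move=> Py Hy; split; last by move=> H; exists y, Py.
move=> [z [Pz [Hz R]]].
case: (htot Py Pz) => le1.
- by have [_ c] := hcoh Py Pz le1; apply/(c i t Hy).
- by have [_ c] := hcoh Pz Py le1; apply/(c i t Hz).
Qed.

Definition incl y (Py : P y) (c : mkS (d y)) : mkS udata :=
  exist _ (proj1_sig c) (ex_intro _ y (ex_intro _ Py (proj2_sig c))).

Lemma union_emb y (Py : P y) : embedding (mkS (d y)) (mkS udata) (incl Py).
Proof.
split; first by move=> a b /(f_equal (@proj1_sig _ _)) /= /sig_eq.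
move=> i x /=; apply: iff_sym; apply: union_rel => // k.
exact: proj2_sig (x k).
Qed.

Lemma union_age : (forall y, P y -> age_sub (mkS (d y)) A) ->
  age_sub (mkS udata) A.
Proof.
move=> hage s [e [ei er]].
case: (posnP (fsize s)) => [/size0 //|pos].
have key : forall m, m <= fsize s -> exists y (_ : P y),
    forall k : 'I_(fsize s), k < m -> (d y).1 (proj1_sig (e k)).
  elim=> [_|m IH lem].
    have [y [Py _]] := proj2_sig (e (Ordinal pos)).
    by exists y, Py.
  have [y [Py Hy]] := IH (ltnW lem).
  have [z [Pz Hz]] := proj2_sig (e (Ordinal lem)).
  case: (htot Py Pz) => le1.
  - have [c _] := hcoh Py Pz le1.
    exists z, Pz => k; rewrite ltnS leq_eqVlt => /orP [/eqP km|km].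
      by have -> : k = Ordinal lem by apply: val_inj.
    by apply: c; apply: Hy.
  - have [c _] := hcoh Pz Py le1.
    exists y, Py => k; rewrite ltnS leq_eqVlt => /orP [/eqP km|km].
      have -> : k = Ordinal lem by apply: val_inj.
      by apply: c.
    by apply: Hy.
have [y [Py Hy]] := key _ (leqnn _).
apply: (hage y Py).
exists (fun k => exist (fun u => (d y).1 u) (proj1_sig (e k)) (Hy k (ltn_ord k))).
split.
  by move=> a b /(f_equal (@proj1_sig _ _)) /= /sig_eq /ei.
move=> i x; apply: (iff_trans (er i x)) => /=.
apply: union_rel => // k; exact: Hy.
Qed.

End Union.

Section Build.
Hypothesis hext : extension_property A.
Variables (T : Type) (W : T -> T -> Prop).
Hypotheses (Wrefl : forall x, W x x) (Wtrans : forall x y z, W x y -> W y z -> W x z)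
  (Wanti : forall x y, W x y -> W y x -> x = y) (Wtot : forall x y, W x y \/ W y x)
  (Wmin : forall P : T -> Prop, (exists x, P x) -> exists z, P z /\ forall x, P x -> W z x).
Variables (B : (T * nat) -> finstr mu) (AB : forall x, A (B x)).

Definition Z := (T * nat)%type.
Definition U := (Z * nat)%type.
Definition n (x : Z) := fsize (B x).

Definition ok (x : Z) (dL : U -> Prop) (rL : forall i : I, ('I_(mu i) -> U) -> Prop) :=
  [/\ card_lt (mkS (dL, rL)) A, age_sub (mkS (dL, rL)) A & (forall u, dL u -> u.1 <> x)].

Definition Spec (x : Z) (dL : U -> Prop) (rL : forall i : I, ('I_(mu i) -> U) -> Prop)
  (d : Data U) :=
  [/\ (forall u, d.1 u -> dL u \/ (u.1 = x /\ u.2 < n x)), (forall u, dL u -> d.1 u),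
      (forall i t, (forall k, dL (t k)) -> (rL i t <-> d.2 i t)),
      age_sub (mkS d) A & embeds (fs_struct (B x)) (mkS d)].

Section Step.
Variables (x : Z) (dL : U -> Prop) (rL : forall i : I, ('I_(mu i) -> U) -> Prop).
Hypothesis fresh : forall u, dL u -> u.1 <> x.
Variables (D : structure mu) (f : mkS (dL, rL) -> D) (g : 'I_(n x) -> D).
Hypotheses (hf : embedding (mkS (dL, rL)) D f) (hg : embedding (fs_struct (B x)) D g)
  (hD : age_sub D A).

Definition isnew (k : 'I_(n x)) := ~ exists c, f c = g k.
Definition dom' (u : U) := dL u \/ (u.1 = x /\ exists h : u.2 < n x, isnew (Ordinal h)).
Definition phi (u : U) : option D :=
  match pselect (dL u) with
  | left q => Some (f (exist _ u q))
  | right _ => match pselect (u.2 < n x) with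
               | left h => Some (g (Ordinal h))
               | right _ => None end end.
Definition rel' i (t : 'I_(mu i) -> U) :=
  exists t' : 'I_(mu i) -> D, (forall k, phi (t k) = Some (t' k)) /\ @Defs.rel I mu D i t'.
Definition dnew : Data U := (dom', rel').

Lemma phi_old u (q : dL u) : phi u = Some (f (exist _ u q)).
Proof. by rewrite /phi; case: pselect => [q'|//]; rewrite (Prop_irrelevance q q'). Qed.

Lemma phi_new u (nq : ~ dL u) (h : u.2 < n x) : phi u = Some (g (Ordinal h)).
Proof.
rewrite /phi; case: pselect => [//|_]; case: pselect => [h'|//].
by rewrite (Prop_irrelevance h h').
Qed.

Lemma phi_some u : dom' u -> exists e, phi u = Some e.
Proof.
case: (pselect (dL u)) => [q _|nq [//|[_ [h _]]]].
  by eexists; apply: phi_old q.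
by eexists; apply: phi_new nq h.
Qed.

Lemma phi_inj u v : dom' u -> dom' v -> phi u = phi v -> u = v.
Proof.
case: (pselect (dL u)) => [qu|nqu]; case: (pselect (dL v)) => [qv|nqv].
- move=> _ _; rewrite (phi_old qu) (phi_old qv) => -[] /(proj1 hf).
  by move/(f_equal (@proj1_sig _ _)).
- move=> _ [//|[_ [h nw]]]; rewrite (phi_old qu) (phi_new nqv h) => -[] E.
  by case: nw; exists (exist _ u qu).
- move=> [//|[_ [h nw]]] _; rewrite (phi_old qv) (phi_new nqu h) => -[] E.
  by case: nw; exists (exist _ v qv).
- move=> [//|[ux [hu _]]] [//|[vx [hv _]]].
  rewrite (phi_new nqu hu) (phi_new nqv hv) => -[] /(proj1 hg) /(f_equal val) /= E.
  by case: u ux hu {nqu} E => [u1 u2] /= ->; case: v vx hv {nqv} => [v1 v2] /= -> _ _ ->.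
Qed.

Definition Phi (c : mkS dnew) : D := proj1_sig (cid (phi_some (proj2_sig c))).

Lemma PhiE c : phi (proj1_sig c) = Some (Phi c).
Proof. by rewrite /Phi; case: cid. Qed.

Lemma Phi_emb : embedding (mkS dnew) D Phi.
Proof.
split.
  move=> a b E; apply: sig_eq; apply: phi_inj; try exact: proj2_sig.
  by rewrite !PhiE E.
move=> i y /=; split.
  move=> [t' [Ht R]].
  have -> : (fun k => Phi (y k)) = t'; last by [].
  by apply: funext => k; have := Ht k; rewrite PhiE => -[].
by move=> R; exists (fun k => Phi (y k)); split => // k; apply: PhiE.
Qed.

Definition psi0 (k : 'I_(n x)) : U :=
  match pselect (exists c, f c = g k) with
  | left H => proj1_sig (proj1_sig (cid H))
  | right _ => (x, val k) end.

Lemma psi0_prop k : dom' (psi0 k) /\ phi (psi0 k) = Some (g k).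
Proof.
rewrite /psi0; case: pselect => [H|nH].
  case: cid => [[c qc] /= E]; split; first by left.
  by rewrite (phi_old qc) E.
have nq : ~ dL (x, val k) by move=> /fresh.
split.
  by right; split => //; exists (ltn_ord k); move=> [c E]; apply: nH; exists c;
     rewrite E; congr g; apply: val_inj.
by rewrite (phi_new nq (ltn_ord k)); congr Some; congr g; apply: val_inj.
Qed.

Definition psi (k : 'I_(n x)) : mkS dnew := exist _ (psi0 k) (proj1 (psi0_prop k)).

Lemma psi_emb : embedding (fs_struct (B x)) (mkS dnew) psi.
Proof.
split.
  move=> a b /(f_equal (@proj1_sig _ _)) /= E.
  have := proj2 (psi0_prop a); rewrite E (proj2 (psi0_prop b)) => -[].
  by move/(proj1 hg).
move=> i t; apply: (iff_trans (proj2 hg i t)) => /=; split.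
  by move=> R; exists (fun k => g (t k)); split => // k; apply: (proj2 (psi0_prop _)).
move=> [t' [Ht R]].
have -> : (fun k => g (t k)) = t'; last by [].
by apply: funext => k; have := Ht k; rewrite (proj2 (psi0_prop _)) => -[].
Qed.

Lemma step_data : exists d, Spec x dL rL d.
Proof.
exists dnew; split.
- by move=> u [|[ux [h _]]]; [left|right].
- by move=> u q; left.
- move=> i t Ht.
  pose xx := fun k => exist (fun u => (dL, rL).1 u) (t k) (Ht k).
  apply: (iff_trans (proj2 hf i xx)); split.
    by move=> R; exists (fun k => f (xx k)); split => // k; apply: phi_old.
  move=> [t' [Ht' R]].
  have -> : (fun k => f (xx k)) = t'; last by [].
  by apply: funext => k; have := Ht' k; rewrite (phi_old (Ht k)) => -[].
- exact: (age_sub_emb (ex_intro _ Phi Phi_emb) hD).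
- by exists psi; apply: psi_emb.
Qed.

End Step.

Lemma step_ex x dL rL : ok x dL rL -> exists d, Spec x dL rL d.
Proof.
move=> [cl ag fr].
have [D [hD [[f hf] [g hg]]]] := hext cl ag (AB x).
exact: (step_data fr hf hg hD).
Qed.

Definition ltZ (a b : Z) := (W a.1 b.1 /\ a.1 <> b.1) \/ (a.1 = b.1 /\ a.2 < b.2).

Lemma ltZ_irr a : ~ ltZ a a.
Proof. by case=> [[_ //]|[_]]; rewrite ltnn. Qed.

Lemma ltZ_trans a b c : ltZ a b -> ltZ b c -> ltZ a c.
Proof.
case: a b c => [a1 a2] [b1 b2] [c1 c2]; rewrite /ltZ /=.
case=> [[Wab nab]|[eab lab]]; case=> [[Wbc nbc]|[ebc lbc]].
- left; split; first exact: Wtrans Wab Wbc.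
  by move=> eac; subst c1; apply: nbc; apply: Wanti.
- by subst c1; left.
- by subst b1; left.
- by right; split; [congruence | apply: ltn_trans lab lbc].
Qed.

Lemma ltZ_tri a b : ltZ a b \/ a = b \/ ltZ b a.
Proof.
case: a b => [a1 a2] [b1 b2]; rewrite /ltZ /=.
case: (pselect (a1 = b1)) => [e|ne].
  subst b1; case: (ltngtP a2 b2) => [l|l|->]; first by left; right.
    by right; right; right.
  by right; left.
case: (Wtot a1 b1) => w; first by left; left.
by right; right; left; split => // e; apply: ne.
Qed.

Lemma ltZ_min (P : Z -> Prop) : (exists x, P x) -> exists z, P z /\ forall y, P y -> ~ ltZ y z.
Proof.
move=> [[x1 x2] Px].
have [a [[i Pai] mina]] := @Wmin (fun a => exists i, P (a, i)) (ex_intro _ x1 (ex_intro _ x2 Px)).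
have exi : exists i, `[< P (a, i) >] by exists i; apply/asboolP.
case: (ex_minnP exi) => j /asboolP Paj minj.
exists (a, j); split => // [[y1 y2]] Py; rewrite /ltZ /=.
case=> [[Wya nya]|[eya lya]].
  by apply: nya; apply: Wanti => //; apply: mina; exists y2.
subst y1; have := minj y2 (asboolT Py); rewrite leqNgt lya //.
Qed.

Lemma wfZ : well_founded ltZ.
Proof.
move=> x; case: (pselect (Acc ltZ x)) => [xA|nA]; first exact: xA.
exfalso.
have [z [nz minz]] := ltZ_min (ex_intro (fun z => ~ Acc ltZ z) x nA).
apply: nz; constructor => y lyz.
case: (pselect (Acc ltZ y)) => [yA|ny]; first exact: yA.
by case: (minz y ny).
Qed.

Definition Fstep (x : Z) (rec : forall y, ltZ y x -> Data U) : Data U :=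
  let dL := fun u => exists y (p : ltZ y x), (rec y p).1 u in
  let rL := fun i t => exists y (p : ltZ y x), (forall k, (rec y p).1 (t k)) /\ (rec y p).2 i t in
  match pselect (ok x dL rL) with
  | left H => proj1_sig (cid (step_ex H))
  | right _ => (dL, rL) end.

Definition build := Fix wfZ (fun _ => Data U) (@Fstep).

Lemma buildE x : build x = @Fstep x (fun y _ => build y).
Proof.
rewrite /build; apply: (@Fix_eq Z ltZ wfZ (fun _ => Data U) (@Fstep)) => x0 f1 f2 E.
have -> : f1 = f2; last by [].
apply: functional_extensionality_dep => y; apply: functional_extensionality_dep => p.
exact: E.
Qed.

Definition ud x := udata (fun y => ltZ y x) build.

Lemma build_spec x :
  (ok x (ud x).1 (ud x).2 /\ Spec x (ud x).1 (ud x).2 (build x)) \/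
  (~ ok x (ud x).1 (ud x).2 /\ build x = ud x).
Proof.
rewrite buildE /Fstep; case: pselect => H.
  by left; split => //; case: cid.
by right; split.
Qed.

Variable Xs : Z -> Prop.
Hypothesis Rsmall : forall x, Xs x -> forall G : isotype_in A -> U, injective G ->
  (forall t, ltZ (G t).1 x /\ (G t).2 < n (G t).1) -> False.

Lemma card_ok x dL rL : Xs x -> (forall u, dL u -> ltZ u.1 x /\ u.2 < n u.1) ->
  card_lt (mkS (dL, rL)) A.
Proof.
move=> Xx H [G Gi]; apply: (Rsmall Xx (G := fun t => proj1_sig (G t))).
  by move=> a b /sig_eq /Gi.
by move=> t; apply: H; apply: (proj2_sig (G t)).
Qed.

Lemma coh_refl (d : Data U) : coh d d.
Proof. by split. Qed.

Definition Inv x :=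
 [/\ (forall u, (build x).1 u -> (u.1 = x \/ ltZ u.1 x) /\ u.2 < n u.1),
     (forall y, ltZ y x -> coh (build y) (build x)),
     age_sub (mkS (build x)) A &
     (Xs x -> embeds (fs_struct (B x)) (mkS (build x)))].

Lemma inv_all x : Inv x.
Proof.
elim/(well_founded_ind wfZ): x => x IH.
pose P := fun y => ltZ y x.
pose le := fun y z : Z => y = z \/ ltZ y z.
have hcoh : forall y z, P y -> P z -> le y z -> coh (build y) (build z).
  move=> y z _ Pz [<-|lyz]; first exact: coh_refl.
  by have [_ c _ _] := IH z Pz; apply: c.
have htot : forall y z, P y -> P z -> le y z \/ le z y.
  move=> y z _ _; case: (ltZ_tri y z) => [l|[e|l]].
  - by left; right.
  - by left; left.
  - by right; right.
have hage : forall y, P y -> age_sub (mkS (build y)) A.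
  by move=> y Py; have [_ _ a _] := IH y Py.
have uage := union_age hcoh htot hage.
have ubound : forall u, (ud x).1 u -> ltZ u.1 x /\ u.2 < n u.1.
  move=> u [y [Py Hu]]; have [b _ _ _] := IH y Py.
  have [[e|l] bd] := b u Hu; split => //; first by rewrite e.
  exact: ltZ_trans l Py.
have ufresh : forall u, (ud x).1 u -> u.1 <> x.
  by move=> u /ubound [l _] e; rewrite e in l; apply: (ltZ_irr l).
case: (build_spec x) => [[okx [S1 S2 S3 S4 S5]] | [nok E]].
- split => //.
  + move=> u /S1 [/ubound [l b]|[ux b]]; first by split => //; right.
    by split; [left|rewrite ux].
  + move=> y Py; split.
      by move=> u Hu; apply: S2; exists y, Py.
    move=> i t Ht.
    apply: (iff_trans (iff_sym (union_rel hcoh htot Py Ht))).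
    apply: S3 => k; exists y, Py; exact: Ht.
- rewrite /Inv E; split => //.
  + by move=> u /ubound [l b]; split => //; right.
  + move=> y Py; split; first by move=> u Hu; exists y, Py.
    by move=> i t Ht; apply: iff_sym; apply: (union_rel hcoh htot Py Ht).
  + move=> Xx; exfalso; apply: nok; split => //.
    exact: card_ok Xx ubound.
Qed.

Lemma build_final : exists C : structure mu,
  age_sub C A /\ forall x, Xs x -> embeds (fs_struct (B x)) C.
Proof.
pose P := fun _ : Z => True.
pose le := fun y z : Z => y = z \/ ltZ y z.
have hcoh : forall y z, P y -> P z -> le y z -> coh (build y) (build z).
  move=> y z _ _ [<-|lyz]; first exact: coh_refl.
  by have [_ c _ _] := inv_all z; apply: c.
have htot : forall y z, P y -> P z -> le y z \/ le z y.
  move=> y z _ _; case: (ltZ_tri y z) => [l|[e|l]].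
  - by left; right.
  - by left; left.
  - by right; right.
exists (mkS (udata P build)); split.
  by apply: (union_age hcoh htot) => y _; have [_ _ a _] := inv_all y.
move=> x Xx; have [_ _ _ e] := inv_all x.
apply: embeds_trans (e Xx) _.
exact: (ex_intro _ _ (union_emb hcoh htot (Logic.I : P x))).
Qed.

End Build.

Definition rep (t : isotype_in A) : finstr mu := proj1_sig (cid (proj2_sig t)).

Lemma rep_spec t : A (rep t) /\ proj1_sig t = fiso (rep t).
Proof. by rewrite /rep; case: cid. Qed.

Lemma fiso_refl (s : finstr mu) : fiso s s.
Proof. by exists id; split => [|y]; [split | exists y]. Qed.

Definition tclass (s : finstr mu) (As : A s) : isotype_in A :=
  exist _ (fiso s) (ex_intro _ s (conj As erefl)).

Lemma class_emb (s : finstr mu) (As : A s) : embeds (fs_struct s) (fs_struct (rep (tclass As))).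
Proof.
have [_ E] := rep_spec (tclass As); move: E; rewrite /= => E.
have : fiso s (rep (tclass As)) by rewrite E; apply: fiso_refl.
by move=> [f [hf _]]; exists f.
Qed.

Lemma finite_case :
  (exists M (f : isotype_in A -> nat), injective f /\ forall t, f t < M) ->
  representable A.
Proof.
move=> [M [f [fi fb]]].
have [[b0 Ab0] [hdown hdir]] := hid.
have key : forall m, exists u, A u /\ forall t, f t < m -> fle (rep t) u.
  elim=> [|m [u [Au Hu]]]; first by exists b0.
  case: (pselect (exists t, f t = m)) => [[t ft]|nt].
    have [w [Aw [uw tw]]] := hdir u (rep t) Au (proj1 (rep_spec t)).
    exists w; split => // t'; rewrite ltnS leq_eqVlt => /orP [/eqP e|l].
      by have -> : t' = t by apply: fi; rewrite e ft.
    exact: embeds_trans (Hu t' l) uw.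
  exists u; split => // t'; rewrite ltnS leq_eqVlt => /orP [/eqP e|l].
    by case: nt; exists t'.
  exact: Hu.
have [u [Au Hu]] := key M.
exists (fs_struct u) => s; split.
  by move=> H; apply: (hdown s u H Au).
by move=> As; apply: embeds_trans (class_emb As) (Hu _ (fb _)).
Qed.

Lemma div_uniq k q1 r1 q2 r2 : r1 < k -> r2 < k -> q1 * k + r1 = q2 * k + r2 ->
  q1 = q2 /\ r1 = r2.
Proof.
move=> h1 h2 E.
have k0 : 0 < k by apply: leq_ltn_trans h1.
have e1 : (q1 * k + r1) %/ k = q1 by rewrite divnMDl // divn_small // addn0.
have e2 : (q2 * k + r2) %/ k = q2 by rewrite divnMDl // divn_small // addn0.
have m1 : (q1 * k + r1) %% k = r1 by rewrite modnMDl modn_small.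
have m2 : (q2 * k + r2) %% k = r2 by rewrite modnMDl modn_small.
by split; [rewrite -e1 -e2 E | rewrite -m1 -m2 E].
Qed.

Lemma infinite_case (hext : extension_property A) :
  (forall M (f : isotype_in A -> nat), injective f -> ~ (forall t, f t < M)) ->
  representable A.
Proof.
move=> hinf.
set T := isotype_in A.
have [W [Wr Wt Wa Wto Wm]] := wo_exists T.
pose good y := ~ exists G : T -> T * nat, injective G /\ forall t, W (G t).1 y /\ (G t).1 <> y.
have [Y [iota [ii [iY Yg]]]] : exists (Y : T -> Prop) (iota : T -> T * nat),
    injective iota /\ (forall t, Y (iota t).1) /\ (forall y, Y y -> good y).
  case: (pselect (exists y, ~ good y)) => [ex|nex].
    have [ys [bys minys]] := Wm _ ex.
    have [G [Gi GW]] := contrapT bys.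
    exists (fun y => W y ys /\ y <> ys), G; split => //; split => // y [Wy ny] Hex.
    by apply: ny; apply: Wa => //; apply: minys => g; apply: g.
  exists (fun _ => True), (fun t => (t, 0)); split; first by move=> a b [].
  split => // y _; apply: contrapT => ng; apply: nex; exists y; exact: ng.
have [[b0 Ab0] _] := hid.
pose B (x : T * nat) : finstr mu :=
  match pselect (exists t, iota t = x) with
  | left H => rep (proj1_sig (cid H))
  | right _ => b0 end.
have AB : forall x, A (B x).
  by move=> x; rewrite /B; case: pselect => // H; apply: (proj1 (rep_spec _)).
pose Xs := fun x : T * nat => Y x.1.
have Rsmall : forall x, Xs x -> forall G : T -> U T, injective G ->
    (forall t, ltZ W (G t).1 x /\ (G t).2 < n B (G t).1) -> False.
  move=> [y k] Yy G Gi HG; have gy := Yg y Yy; rewrite /= in gy.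
  case: (pselect (exists y0, W y0 y /\ y0 <> y)) => [[y0 [Wy0 ny0]]|none].
    pose H (t : T) : T * nat :=
      if pselect ((G t).1.1 = y) then (y0, 2 * pickle ((G t).1.2, (G t).2) + 1)
      else ((G t).1.1, 2 * pickle ((G t).1.2, (G t).2)).
    apply: gy; exists H; split.
      move=> a b; rewrite /H.
      have GE : forall t, G t = (((G t).1.1, (G t).1.2), (G t).2)
        by move=> t; case: (G t) => [[]].
      case: pselect => ea; case: pselect => eb => -[].
      - move=> /eqP; rewrite eqn_add2r eqn_mul2l /= => /eqP /(pcan_inj pickleK) [e1 e2].
        by apply: Gi; rewrite GE (GE b) ea eb e1 e2.
      - by move=> _ E; exfalso; lia.
      - by move=> _ E; exfalso; lia.
      - move=> e0 /eqP; rewrite eqn_mul2l /= => /eqP /(pcan_inj pickleK) [e1 e2].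
        by apply: Gi; rewrite GE (GE b) e0 e1 e2.
    move=> t; rewrite /H; case: pselect => e /=; first by split.
    have [lt _] := HG t.
    by case: lt => [[Wt' nt']|[et' _]]; [split | case: e].
  have Gy : forall t, (G t).1.1 = y /\ (G t).1.2 < k.
    move=> t; have [lt _] := HG t.
    case: lt => [[Wt' nt']|[et' lt']].
      by case: none; exists (G t).1.1.
    by split.
  pose N := \max_(i : 'I_k) n B (y, val i).
  pose f t := (G t).2 * k + (G t).1.2.
  apply: (hinf (N * k) f).
    move=> a b E; have [e1 e2] := div_uniq (proj2 (Gy a)) (proj2 (Gy b)) E.
    apply: Gi; move: (Gy a) (Gy b) e1 e2.
    case: (G a) => [[a1 a2] a3]; case: (G b) => [[b1 b2] b3] /= [-> _] [-> _] -> -> //.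
  move=> t; rewrite /f.
  have [ey lk] := Gy t.
  have bd : (G t).2 < N.
    have h := proj2 (HG t).
    have e1 : (G t).1 = (y, (G t).1.2) by move: ey; case: (G t) => [[a b] c] /= ->.
    rewrite e1 in h; apply: (leq_trans h).
    rewrite /N; exact: (@leq_bigmax _ (fun i : 'I_k => n B (y, val i)) (Ordinal lk)).
  have : ((G t).2).+1 * k <= N * k by rewrite leq_mul2r bd orbT.
  rewrite mulSn; lia.
have [C [agC embC]] := build_final hext Wt Wa Wto Wm AB Rsmall.
exists C => s; split; first by move/agC.
move=> As; set t := tclass As.
have Xx : Xs (iota t) by apply: iY.
apply: embeds_trans (class_emb As) _.
have -> : rep t = B (iota t).
  rewrite /B; case: pselect => [H|nH]; last by case: nH; exists t.
  by case: cid => t' /= /ii ->.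
exact: embC.
Qed.

End Main.

Theorem lemma1 (I : Type) (mu : I -> nat) (hmu : forall i, 0 < mu i)
  (A : finstr mu -> Prop) :
  ideal A -> extension_property A -> representable A.
Proof.
move=> hid hext.
case: (pselect (exists M (f : isotype_in A -> nat), injective f /\ forall t, f t < M)).
  exact: finite_case.
move=> nfin; apply: (infinite_case hmu hid hext) => M f fi fb.
by apply: nfin; exists M, f.
Qed.
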